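(* Consider the parking problem on the infinite square grid in the model described in the context. Suppose the initial configuration $C(0)$ belongs to the class $\mathcal I_{223}$, i.e.: the set of parking nodes (with their capacities) is symmetric with respect to a unique line of symmetry $l$, the configuration $C(0)$ itself is symmetric with respect to $l$, no robot lies on a node of $l$, and at least one parking node lies on $l$. If the capacity of a parking node lying on $l$ is an odd integer, then the parking problem is unsolvable from $C(0)$.
   Context: The deployment region is the infinite square grid $G=P\times P$, where $P$ is the infinite path on $\mathbb Z$, embedded in the plane. A finite set $\mathcal P=\{p_1,\dots,p_m\}$ of distinct grid nodes are parking nodes; each $p_i$ has a capacity $k_i\ge 1$ known to all robots (maximum number of robots it may accommodate). There are $n=\sum_i k_i$ robots initially at pairwise distinct nodes. Robots are anonymous, autonomous, identical, homogeneous (same deterministic algorithm), oblivious, silent, disoriented (no common coordinate axes, no common chirality), have global visibility and global-strong multiplicity detection (they see the exact number of robots at every node). They act in Look-Compute-Move cycles under a fair asynchronous scheduler; a move goes to one of the four neighbours (or stays) and is instantaneous. The configuration $C(t)$ is given by $\lambda(v)$, the number of robots at node $v$ at time $t$, and $\mu(v)$, the capacity of $v$ if $v$ is a parking node and $0$ otherwise. A grid automorphism $\phi$ is a symmetry of the configuration if $\lambda(\phi(v))=\lambda(v)$ and $\mu(\phi(v))=\mu(v)$ for all $v$, and a symmetry of the parking nodes if $\mu(\phi(v))=\mu(v)$ for all $v$ (so symmetric parking nodes have equal capacities). Symmetries are reflections (about horizontal, vertical or diagonal axes through nodes or edge midpoints) and rotations (by $90^\circ$ or $180^\circ$). The parking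 problem: reach in finite time a configuration where every $p_i$ holds exactly $k_i$ robots, all robots are stationary, and any robot performing a Look decides not to move. It is unsolvable from $C(0)$ if no deterministic distributed algorithm guarantees this from $C(0)$ under all admissible schedules. *)

(* Defs.v *)
From mathcomp Require Import all_boot all_algebra.
Set Implicit Arguments. Unset Strict Implicit. Unset Printing Implicit Defensive.
Import GRing.Theory Num.Theory.
Local Open Scope ring_scope.

Definition node := (int * int)%type.
Definition vadd (a b : node) : node := (a.1 + b.1, a.2 + b.2).

(** Linear part of a grid automorphism: an element of the dihedral group D4,
    (x,y) |-> optionally swap coordinates, then optionally negate each. *)
Record lin := Lin { swp : bool; negx : bool; negy : bool }.
Definition lin_app (f : lin) (v : node) : node :=
  let ab := if swp f then (v.2, v.1) else v in
  (if negx f then - ab.1 else ab.1, if negy f then - ab.2 else ab.2).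
(** determinant -1 (orientation reversing) *)
Definition lin_rev (f : lin) : bool := swp f (+) negx f (+) negy f.

(** Grid automorphisms: v |-> g v + c (these are all automorphisms of P x P). *)
Record gaut := Gaut { glin : lin; gtr : node }.
Definition gapp (phi : gaut) (v : node) : node := vadd (lin_app (glin phi) v) (gtr phi).

(** Reflections about an axis (horizontal, vertical, diagonal; through nodes or
    edge midpoints): orientation reversing involutive automorphisms.
    The nodes lying on the axis are exactly the fixed nodes. *)
Definition is_reflection (phi : gaut) : Prop :=
  lin_rev (glin phi) /\ forall v, gapp phi (gapp phi v) = v.
Definition on_axis (phi : gaut) (v : node) : Prop := gapp phi v = v.

(** Configurations: n robots (indexed by 'I_n) at positions [pos];
    mu v = capacity of v if v is a parking node, 0 otherwise. *)
Definition lambda n (pos : 'I_n -> node) (v : node) : nat := #|[pred i | pos i == v]|.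

Definition sym_parking (mu : node -> nat) (phi : gaut) : Prop :=
  forall v, mu (gapp phi v) = mu v.
Definition sym_config n (mu : node -> nat) (pos : 'I_n -> node) (phi : gaut) : Prop :=
  sym_parking mu phi /\ forall v, lambda pos (gapp phi v) = lambda pos v.

Definition parking_instance n (mu : node -> nat) : Prop :=
  exists s : seq node, uniq s /\ (forall v, (0 < mu v)%N = (v \in s)) /\
     n = (\sum_(v <- s) mu v)%N.

(** A view: the snapshot (multiplicity, capacity) of every node, expressed in the
    local coordinate system of the observing robot (origin = its position). *)
Definition view := node -> (nat * nat).
Inductive dir := Stay | Up | Down | Left | Right.
Definition dir_off (d : dir) : node :=
  match d with
  | Stay => (0, 0) | Up => (0, 1) | Down => (0, -1) | Left => (-1, 0) | Right => (1, 0)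
  end.
(** A deterministic algorithm (same for all robots, oblivious):
    map from current view to a move in local coordinates. *)
Definition algorithm := view -> dir.

Definition view_of n (mu : node -> nat) (pos : 'I_n -> node) (f : lin) (v : node) : view :=
  fun w => let u := vadd v (lin_app f w) in (lambda pos u, mu u).

(** Execution state: positions and pending destination (Some target after a
    Look/Compute whose Move has not yet been performed). *)
Definition state n := (('I_n -> node) * ('I_n -> option node))%type.

(** One time step: activated robots that are idle perform Look+Compute on the
    current configuration; activated robots with a pending move perform Move. *)
Definition step n (A : algorithm) (mu : node -> nat) (F : 'I_n -> lin)
    (st : state n) (act : 'I_n -> bool) : state n :=
  let pos := st.1 in let pend := st.2 in
  (fun i => if act i then (if pend i is Some w then w else pos i) else pos i,
   fun i => if act i then
              (if pend i is Some _ then None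
               else Some (vadd (pos i) (lin_app (F i) (dir_off (A (view_of mu pos (F i) (pos i)))))))
            else pend i).

Fixpoint exec n (A : algorithm) (mu : node -> nat) (F : 'I_n -> lin)
    (pos0 : 'I_n -> node) (sched : nat -> 'I_n -> bool) (t : nat) : state n :=
  match t with
  | 0 => (pos0, fun _ => None)
  | t'.+1 => step A mu F (exec A mu F pos0 sched t') (sched t')
  end.

Definition fair n (sched : nat -> 'I_n -> bool) : Prop :=
  forall (i : 'I_n) (t : nat), exists t', (t <= t')%N /\ sched t' i.

Definition solved n (A : algorithm) (mu : node -> nat) (F : 'I_n -> lin) (st : state n) : Prop :=
  (forall v, lambda st.1 v = mu v) /\
  (forall i, st.2 i = None \/ st.2 i = Some (st.1 i)) /\
  (forall i, A (view_of mu st.1 (F i) (st.1 i)) = Stay).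

(** A solves the problem from (mu, pos0): for every choice of local frames
    (disorientation) and every fair asynchronous schedule, a solved state is reached. *)
Definition solves n (A : algorithm) (mu : node -> nat) (pos0 : 'I_n -> node) : Prop :=
  forall (F : 'I_n -> lin) (sched : nat -> 'I_n -> bool), fair sched ->
    exists T, solved A mu F (exec A mu F pos0 sched T).

Definition unsolvable n (mu : node -> nat) (pos0 : 'I_n -> node) : Prop :=
  ~ exists A : algorithm, solves A mu pos0.

(* Main.v *)
Require Import Defs.
From mathcomp Require Import all_boot all_algebra.
From mathcomp Require Import zify.
From Stdlib Require Import FunctionalExtensionality.
Import GRing.Theory Num.Theory.

Lemma card_predE (T : finType) (P : pred T) : #|[pred i | P i]| = (\sum_i (P i : nat))%N.
Proof. by rewrite -sum1_card big_mkcond /=; apply: eq_bigr => i _; rewrite inE; case: (P i). Qed.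

Lemma even_inv (n : nat) (sg : 'I_n -> 'I_n) (P : pred 'I_n) :
  involutive sg -> (forall i, val (sg i) != val i) -> (forall i, P (sg i) = P i) ->
  ~~ odd (\sum_i (P i : nat))%N.
Proof.
move=> K ne HP.
have inj := inv_inj K.
have -> : (\sum_i (P i : nat) = \sum_i ((P i && (val i < val (sg i)))%N : nat)
   + \sum_i ((P i && (val (sg i) < val i))%N : nat))%N.
  rewrite -big_split /=; apply: eq_bigr => i _.
  have := ne i; case: (P i) => //=; case: ltngtP => //.
rewrite [X in (_ + X)%N](reindex_inj inj) /=.
under [X in (_ + X)%N]eq_bigr do rewrite HP K.
by rewrite addnn odd_double.
Qed.

Lemma lin_add f a b : lin_app f (vadd a b) = vadd (lin_app f a) (lin_app f b).
Proof.
case: f => [[] [] []]; case: a => a1 a2; case: b => b1 b2;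
rewrite /lin_app /vadd /=; f_equal; lia.
Qed.

Lemma lin_id w : lin_app (Lin false false false) w = w.
Proof. by case: w. Qed.

Lemma LL_of (rho : gaut) : (forall v, gapp rho (gapp rho v) = v) ->
  forall w, lin_app (glin rho) (lin_app (glin rho) w) = w.
Proof.
case: rho => [[s x y] [c1 c2]] H [w1 w2].
have H0 := H (Posz 0, Posz 0); have Hw := H (w1, w2).
move: H0 Hw; clear H; case: s; case: x; case: y;
rewrite /gapp /lin_app /vadd /= => H0 Hw; case: H0 => *; case: Hw => *; f_equal; lia.
Qed.

Lemma gapp_vadd (rho : gaut) p q :
  vadd (gapp rho p) (lin_app (glin rho) q) = gapp rho (vadd p q).
Proof.
rewrite /gapp lin_add; case: (lin_app _ p) => a b; case: (lin_app _ q) => c d;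
case: (gtr rho) => e f; rewrite /vadd /=; f_equal; lia.
Qed.

Theorem lemma3 (n : nat) (mu : node -> nat) (pos0 : 'I_n -> node) (rho : gaut) :
  parking_instance n mu ->
  injective pos0 ->
  is_reflection rho ->
  sym_parking mu rho ->
  (forall rho' : gaut, is_reflection rho' -> sym_parking mu rho' ->
     forall v, gapp rho' v = gapp rho v) ->
  sym_config mu pos0 rho ->
  (forall i, ~ on_axis rho (pos0 i)) ->
  (exists v, on_axis rho v /\ (0 < mu v)%N) ->
  (exists v, on_axis rho v /\ (0 < mu v)%N /\ odd (mu v)) ->
  unsolvable mu pos0.
Proof.
move=> _ inj0 [_ rhoinv] symmu _ [_ symlam] offax _ [v [vax [_ vodd]]] [A solA].
have rho_inj : injective (gapp rho) by apply: (can_inj rhoinv).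
have ex_j : forall i, exists j, pos0 j = gapp rho (pos0 i).
  move=> i; have : (0 < lambda pos0 (gapp rho (pos0 i)))%N.
    by rewrite symlam /lambda; apply/card_gt0P; exists i; rewrite inE.
  by rewrite /lambda => /card_gt0P [j]; rewrite inE => /eqP; exists j.
pose sg i := odflt i [pick j | pos0 j == gapp rho (pos0 i)].
have sgP : forall i, pos0 (sg i) = gapp rho (pos0 i).
  move=> i; rewrite /sg; case: pickP => [j /eqP //|H].
  by case: (ex_j i) => j Hj; move: (H j); rewrite Hj eqxx.
have sgK : involutive sg by move=> i; apply: inj0; rewrite !sgP rhoinv.
have sg_inj := inv_inj sgK.
have sgne : forall i, val (sg i) != val i.
  move=> i; apply/negP => /eqP/val_inj E; apply: (offax i).
  by rewrite /on_axis -sgP E.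
pose L := glin rho.
have LL := @LL_of rho rhoinv.
pose F i := if (val i < val (sg i))%N then Lin false false false else L.
have HF : forall i w, lin_app (F (sg i)) w = lin_app L (lin_app (F i) w).
  move=> i w; rewrite /F sgK; have := sgne i.
  case: ltngtP => //= _ _; by rewrite lin_id ?LL.
pose sched := fun (_ : nat) (_ : 'I_n) => true.
have fs : fair sched by move=> i t; exists t.
have lam_sym : forall pos : 'I_n -> node, (forall i, pos (sg i) = gapp rho (pos i)) ->
    forall u, lambda pos (gapp rho u) = lambda pos u.
  move=> pos H u; rewrite /lambda !card_predE (reindex_inj sg_inj) /=.
  by apply: eq_bigr => i _; rewrite H (inj_eq rho_inj).
have inv : forall t, (forall i, (exec A mu F pos0 sched t).1 (sg i)
                              = gapp rho ((exec A mu F pos0 sched t).1 i)) /\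
                     (forall i, (exec A mu F pos0 sched t).2 (sg i)
                              = omap (gapp rho) ((exec A mu F pos0 sched t).2 i)).
  elim=> [|t [IH1 IH2]]; first by split => // i; exact: sgP.
  rewrite /=; set st := exec A mu F pos0 sched t in IH1 IH2 *.
  split=> i; rewrite /step /sched /= IH2; case: (st.2 i) => [w|] //=.
  have Hv : view_of mu st.1 (F (sg i)) (st.1 (sg i)) = view_of mu st.1 (F i) (st.1 i).
    apply: functional_extensionality => w.
    by rewrite /view_of HF IH1 gapp_vadd lam_sym // symmu.
  by rewrite Hv HF IH1 gapp_vadd.
have [T [Hlam _]] := solA F sched fs.
have [I1 _] := inv T.
move: vodd; rewrite -(Hlam v) /lambda card_predE.
have E := @even_inv n sg (fun i => (exec A mu F pos0 sched T).1 i == v) sgK sgne.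
move=> Ho; apply: (negP (E _) Ho) => i /=.
by rewrite I1 -{1}vax (inj_eq rho_inj).
Qed.
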